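(* Let $(g(x))_{x\ge0}$ be a semigroup of linear maps on a real finite-dimensional vector space $V$. Then there exists a decomposition $V=\bigoplus_{i=1}^n V_i$ with $\dim V_i\ge1$ such that each $V_i$ is $g(x)$-invariant for all $x\ge0$, and for each $i$ one of the following holds: (1) for every $x\ge0$, $g(x)|_{V_i}$ has exactly one eigenvalue $\lambda(x)$ (over $\mathbb C$), and $\lambda(x)$ is real with $\lambda(x)\ge0$; or (2) for every $x\ge0$, the set of (complex) eigenvalues of $g(x)|_{V_i}$ is contained in $\{\lambda(x),\overline{\lambda(x)}\}$ for some $\lambda(x)\in\mathbb C$, and $\lambda(x)\notin\mathbb R$ for at least one $x\ge0$.
   Context: A semigroup is a map $g:[0,\infty)\to L(V)$ with $g(0)=\mathrm{id}$ and $g(x+y)=g(x)g(y)$ for all $x,y\ge0$, where $L(V)$ denotes the linear maps $V\to V$. *)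

(* Defs.v *)
From HB Require Import structures.
From mathcomp Require Import all_boot all_order all_algebra.
From mathcomp Require Import reals.
From mathcomp Require Import complex.
Set Implicit Arguments. Unset Strict Implicit. Unset Printing Implicit Defensive.
Import Order.TTheory GRing.Theory Num.Theory.
Local Open Scope ring_scope.

(* Linear maps V -> V with V = R^n act on row vectors: v |-> v *m A.
   A subspace of V is the row space of a square matrix U : 'M_n. *)

(* Matrix of the restriction of A to the (A-invariant) subspace U,
   in the basis given by the rows of row_base U. *)
Definition restrict (R : fieldType) (n : nat) (U A : 'M[R]_n) : 'M[R]_(\rank U) :=
  row_base U *m A *m pinvmx (row_base U).

Definition restrictC (R : rcfType) (n : nat) (U A : 'M[R]_n) : 'M[R[i]]_(\rank U) :=
  map_mx (real_complex R) (restrict U A).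

Definition case1 (R : rcfType) (n : nat) (U : 'M[R]_n) (g : R -> 'M[R]_n) : Prop :=
  forall x : R, 0 <= x ->
    exists l : R, 0 <= l /\
      forall mu : R[i], eigenvalue (restrictC U (g x)) mu = (mu == real_complex R l).

Definition case2 (R : rcfType) (n : nat) (U : 'M[R]_n) (g : R -> 'M[R]_n) : Prop :=
  exists lam : R -> R[i],
    (forall x : R, 0 <= x -> forall mu : R[i],
        eigenvalue (restrictC U (g x)) mu -> mu = lam x \/ mu = conjc (lam x)) /\
    (exists x : R, 0 <= x /\ Im (lam x) != 0).

(* Main.v *)
Require Import Defs.
From HB Require Import structures.
From mathcomp Require Import all_boot all_order all_algebra.
From mathcomp Require Import reals.
From mathcomp Require Import complex.
From mathcomp Require Import ring.
From mathcomp Require Import boolp.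
From Stdlib Require Import Classical_Prop.
Import Order.TTheory GRing.Theory Num.Theory.
Local Open Scope ring_scope.

Section Generic.
Variable K : fieldType.

Lemma eig_rowfree r n (B : 'M[K]_(r, n)) (f : 'M_n) a :
  row_free B -> (B *m f <= B)%MS ->
  eigenvalue (B *m f *m pinvmx B) a <->
  exists v : 'rV_n, [/\ v != 0, (v <= B)%MS & v *m f = a *: v].
Proof.
move=> Bfree Bf; split.
  move/eigenvalueP=> [w Hw w0]; exists (w *m B); split.
  - by rewrite mul_mx_rowfree_eq0.
  - exact: submxMl.
  have E : B *m f = B *m f *m pinvmx B *m B by rewrite mulmxKpV.
  by rewrite -mulmxA E mulmxA Hw -scalemxAl.
move=> [v [v0 vB vf]]; apply/eigenvalueP; exists (v *m pinvmx B).
  apply: (row_free_inj Bfree) => /=.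
  rewrite -scalemxAl (mulmxKpV vB) -mulmxA (mulmxKpV Bf) mulmxA (mulmxKpV vB) //.
apply: contraNneq v0 => w0; by rewrite -(mulmxKpV vB) w0 mul0mx.
Qed.

Lemma mulmx_expD n m (A : 'M[K]_(m, n)) (B : 'M_n) a b :
  A *m B ^+ (a + b) = A *m B ^+ a *m B ^+ b.
Proof. by rewrite exprD -mulmxE mulmxA. Qed.

Lemma kerstab n (B : 'M[K]_n) k :
  (forall m (A : 'M_(m, n)), A *m B ^+ k.+1 = 0 -> A *m B ^+ k = 0) ->
  forall j m (A : 'M_(m, n)), A *m B ^+ (k + j) = 0 -> A *m B ^+ k = 0.
Proof.
move=> st; elim=> [|j IH] m A; first by rewrite addn0.
move=> H; apply: IH; rewrite addnC mulmx_expD; apply: st.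
by rewrite -mulmx_expD addnS addnC -addnS.
Qed.

Lemma fitting n (B : 'M[K]_n) m (A : 'M_(m, n)) :
  A *m B ^+ n *m B ^+ n = 0 -> A *m B ^+ n = 0.
Proof.
pose st k := forall m (A : 'M_(m, n)), A *m B ^+ k.+1 = 0 -> A *m B ^+ k = 0.
have chain : forall k, (exists2 k', (k' < k)%N & st k') \/ (k <= \rank (kermx (B ^+ k)))%N.
  elim=> [|k [[k' lt st']|IH]]; first by right.
  - by left; exists k' => //; apply: ltnW.
  have sub : (kermx (B ^+ k) <= kermx (B ^+ k.+1))%MS.
    by rewrite sub_kermx exprSr -mulmxE mulmxA mulmx_ker mul0mx.
  have [le|lt] := leqP (\rank (kermx (B ^+ k.+1))) (\rank (kermx (B ^+ k))).
    left; exists k => // m' A' HA.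
    have sup : (kermx (B ^+ k.+1) <= kermx (B ^+ k))%MS.
      by rewrite -(mxrank_leqif_sup sub).2 eqn_leq le (mxrank_leqif_sup sub).1.
    apply/eqP; rewrite -sub_kermx; apply: submx_trans sup; by rewrite sub_kermx HA.
  by right; apply: leq_ltn_trans lt.
case: (chain n) => [[k' lt st']|full].
  move=> H; have : A *m B ^+ k' = 0.
    apply: (@kerstab _ B k' st' (n + n - k') _ A); rewrite subnKC ?mulmx_expD //.
    by apply: leq_trans (ltnW lt) (leq_addr _ _).
  move=> H'; have -> : B ^+ n = B ^+ (k' + (n - k')) by rewrite subnKC // ltnW.
  by rewrite mulmx_expD H' mul0mx.
have : row_full (kermx (B ^+ n)).
  by rewrite /row_full eqn_leq rank_leq_col full.
rewrite -sub1mx sub_kermx mul1mx => /eqP E _; by rewrite E mulmx0.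
Qed.

End Generic.


Lemma eig_pow (K : fieldType) m (v : 'rV[K]_m) (M : 'M_m) c k :
  v *m M = c *: v -> v *m M ^+ k = c ^+ k *: v.
Proof.
move=> H; elim: k => [|k IH]; first by rewrite !expr0 mulmx1 scale1r.
by rewrite exprSr -mulmxE mulmxA IH -scalemxAl H scalerA exprSr.
Qed.

Lemma eig_quad (K : fieldType) m (v : 'rV[K]_m) (A : 'M_m) mu a b :
  v *m A = mu *: v -> v *m (A *m A - a *: A + b%:M) = (mu ^+ 2 - a * mu + b) *: v.
Proof.
move=> H; rewrite mulmxDr mulmxBr mulmxA H -scalemxAl H scalerA -scalemxAr H scalerA.
by rewrite mul_mx_scalar scalerDl scalerBl expr2 [a * mu]mulrC.
Qed.

Section Main.
Variable R : rcfType.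
Variable n : nat.
Local Notation phi M := (map_mx (real_complex R) M).

Definition eigU (U A : 'M[R]_n) (mu : R[i]) :=
  exists v : 'rV[R[i]]_n, [/\ v != 0, (v <= phi U)%MS & v *m phi A = mu *: v].

Lemma eigUP U A mu : (U *m A <= U)%MS ->
  eigenvalue (restrictC U A) mu <-> eigU U A mu.
Proof.
move=> UA.
have -> : restrictC U A = phi (row_base U) *m phi A *m pinvmx (phi (row_base U)).
  by rewrite /restrictC /Defs.restrict map_mxM map_pinvmx map_mxM.
have := @eig_rowfree _ _ _ (phi (row_base U)) (phi A) mu.
rewrite row_free_map row_base_free -map_mxM map_submx stable_row_base => /(_ isT UA) ->.
have E : (phi (row_base U) :=: phi U)%MS by apply/map_eqmx; exact: eq_row_base.
by split=> -[v [v0 vB vf]]; exists v; split=> //; rewrite ?E // -E.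
Qed.

Lemma eigU_exists U A : (U *m A <= U)%MS -> (0 < \rank U)%N -> exists mu, eigU U A mu.
Proof.
move=> UA r0.
have : size (char_poly (restrictC U A)) != 1 by rewrite size_char_poly eqSS -lt0n.
move/closed_rootP => [mu]; rewrite -eigenvalue_root_char => /(eigUP U A mu UA) H.
by exists mu.
Qed.

Lemma map_pow (B : 'M[R]_n) k : phi (B ^+ k) = (phi B) ^+ k.
Proof.
elim: k => [|k IH]; first by rewrite !expr0 map_mx1.
by rewrite !exprS -!mulmxE map_mxM IH.
Qed.

Lemma rank_pos_of (M : 'M[R]_n) (v : 'rV[R[i]]_n) :
  v != 0 -> (v <= phi M)%MS -> (0 < \rank M)%N.
Proof.
move=> v0 vM; rewrite lt0n mxrank_eq0 -(map_mx_eq0 (real_complex R)).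
by move: v0; apply: contraNneq => M0; move: vM; rewrite M0 submx0.
Qed.

Lemma ReC_add (z : R[i]) : real_complex R (complex.Re (z + conjc z)) = z + conjc z.
Proof. case: z => a b /=; congr (Complex _ _); by rewrite subrr. Qed.

Lemma ReC_mul (z : R[i]) : real_complex R (complex.Re (z * conjc z)) = z * conjc z.
Proof. case: z => a b /=; congr (Complex _ _); by rewrite mulrN mulrC addNr. Qed.

End Main.
Arguments eigU {R n}. Arguments eigUP {R n}. Arguments eigU_exists {R n}. Arguments map_pow {R n}. Arguments rank_pos_of {R n}. Arguments ReC_add {R}. Arguments ReC_mul {R}.

Section Semi.
Variable R : rcfType.
Variable n : nat.
Variable g : R -> 'M[R]_n.
Hypothesis gD : forall x y : R, 0 <= x -> 0 <= y -> g (x + y) = g x *m g y.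
Local Notation phi M := (map_mx (real_complex R) M).

Lemma gC x y : 0 <= x -> 0 <= y -> g x *m g y = g y *m g x.
Proof. by move=> hx hy; rewrite -!gD // addrC. Qed.

Definition inv (U : 'M[R]_n) := forall x, 0 <= x -> (U *m g x <= U)%MS.

Lemma split_step W x0 mu1 mu2 : inv W -> 0 <= x0 ->
  eigU W (g x0) mu1 -> eigU W (g x0) mu2 -> mu2 != mu1 -> mu2 != conjc mu1 ->
  exists W1 W2 : 'M[R]_n, [/\ inv W1, inv W2, (0 < \rank W1)%N, (0 < \rank W2)%N
     & ((W1 :&: W2)%MS = 0 /\ (W1 + W2 == W)%MS)].
Proof.
move=> invW hx0 [v1 [v10 v1W v1A]] [v2 [v20 v2W v2A]] ne1 ne2.
set A := g x0.
pose s := complex.Re (mu1 + conjc mu1); pose t := complex.Re (mu1 * conjc mu1).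
pose B := A *m A - s *: A + t%:M.
pose N := B ^+ n.
have commB : forall x, 0 <= x -> g x *m B = B *m g x.
  move=> x hx; have C : g x *m A = A *m g x by rewrite /A gC.
  rewrite /B mulmxDr mulmxBr mulmxDl mulmxBl -!scalemxAr -!scalemxAl !mulmxA C.
  by rewrite -[A *m g x *m A]mulmxA C mulmxA scalar_mxC.
have commN : forall x, 0 <= x -> g x *m N = N *m g x.
  move=> x hx; have := @commrX _ (g x) B n; rewrite /GRing.comm -!mulmxE; apply.
  exact: commB.
have WB : (W *m B <= W)%MS.
  rewrite /B mulmxDr mulmxBr; apply: addmx_sub; first apply: addmx_sub.
  - by rewrite mulmxA; apply: submx_trans (submxMr _ (invW _ hx0)) (invW _ hx0).
  - by rewrite eqmx_opp -scalemxAr; apply: scalemx_sub; apply: invW.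
  - by rewrite mul_mx_scalar; apply: scalemx_sub.
have WN : (W *m N <= W)%MS.
  rewrite /N; have gen : forall k, (W *m B ^+ k <= W)%MS; last exact: gen.
  elim=> [|k IH]; first by rewrite expr0 mulmx1.
  by rewrite exprSr -mulmxE mulmxA; apply: submx_trans (submxMr _ IH) WB.
set W1 := (W :&: kermx N)%MS; set W2 := W *m N.
have capE : (W1 :&: W2)%MS = 0.
  have /submxP [D DE] : ((W1 :&: W2)%MS <= N)%MS.
    by apply: submx_trans (capmxSr _ _) (submxMl _ _).
  have : ((W1 :&: W2)%MS <= kermx N)%MS.
    by apply: submx_trans (capmxSl _ _) (capmxSr _ _).
  rewrite sub_kermx DE => /eqP H; by rewrite (@fitting _ _ B _ D H).
have sub12 : (W1 + W2 <= W)%MS by rewrite addsmx_sub capmxSl WN.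
have phiB : phi B = phi A *m phi A - (real_complex R s) *: phi A + (real_complex R t)%:M.
  by rewrite /B map_mxD map_mxB map_mxM map_mxZ map_scalar_mx.
have eB : forall (v : 'rV[R[i]]_n) (mu : R[i]), v *m phi A = mu *: v ->
    v *m phi B = (mu ^+ 2 - (mu1 + conjc mu1) * mu + mu1 * conjc mu1) *: v.
  by move=> v mu H; rewrite phiB (@eig_quad _ _ _ _ _ _ _ H) /s /t ReC_add ReC_mul.
have n0 : (0 < n)%N.
  by apply: leq_trans (rank_pos_of W v1 v10 v1W) (rank_leq_col _).
exists W1, W2; split.
- move=> x hx; rewrite sub_capmx; apply/andP; split.
    by apply: submx_trans (submxMr _ (capmxSl _ _)) (invW _ hx).
  rewrite sub_kermx -mulmxA commN // mulmxA.
  by move: (capmxSr W (kermx N)); rewrite sub_kermx => /eqP ->; rewrite mul0mx.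
- by move=> x hx; rewrite /W2 -mulmxA -commN // mulmxA submxMr // invW.
- have v1B : v1 *m phi B = 0 *: v1.
    by rewrite (eB _ _ v1A); congr (_ *: _); ring.
  have v1N : v1 *m phi N = 0.
    by rewrite /N map_pow (@eig_pow _ _ _ _ _ _ v1B) expr0n eqn0Ngt n0 /= scale0r.
  apply: (rank_pos_of W1 v1 v10).
  rewrite /W1 (map_capmx (real_complex R)) sub_capmx v1W /= map_kermx sub_kermx v1N //.
- have v2B : v2 *m phi B = ((mu2 - mu1) * (mu2 - conjc mu1)) *: v2.
    by rewrite (eB _ _ v2A); congr (_ *: _); ring.
  have c0 : (mu2 - mu1) * (mu2 - conjc mu1) != 0 by rewrite mulf_neq0 // subr_eq0.
  apply: (rank_pos_of W2 (v2 *m phi N)).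
    by rewrite /N map_pow (@eig_pow _ _ _ _ _ _ v2B) scalemx_eq0 negb_or expf_neq0.
  move/submxP: v2W => [D ->]; by rewrite -mulmxA -map_mxM submxMl.
- split=> //; by rewrite -(mxrank_leqif_eq sub12).2 mxrank_disjoint_sum // addnC mxrank_mul_ker.
Qed.

End Semi.
Arguments inv {R n}. Arguments split_step {R n g}. Arguments gC {R n g}.


Section Dec.
Variable R : rcfType.
Variable n : nat.
Variable g : R -> 'M[R]_n.
Hypothesis gD : forall x y : R, 0 <= x -> 0 <= y -> g (x + y) = g x *m g y.
Local Notation phi M := (map_mx (real_complex R) M).

Definition primary (U : 'M[R]_n) := forall x, 0 <= x -> exists lam,
  forall mu, eigU U (g x) mu -> mu = lam \/ mu = conjc lam.

Definition good (W : 'M[R]_n) (s : seq 'M[R]_n) :=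
  [/\ forall U, U \in s -> [/\ (0 < \rank U)%N, inv g U & primary U],
   (\sum_(U <- s) \rank U)%N = \rank W & ((\sum_(U <- s) U)%MS == W)%MS].

Lemma good0 W : \rank W = 0%N -> good W [::].
Proof.
move=> /eqP; rewrite mxrank_eq0 => /eqP ->; split => //; first by rewrite big_nil mxrank0.
by rewrite big_nil; apply/andP; split; rewrite submx_refl.
Qed.

Lemma decomp k W : (\rank W <= k)%N -> inv g W -> exists s, good W s.
Proof.
elim: k W => [|k IH] W rk invW.
  by exists [::]; apply: good0; apply/eqP; rewrite -leqn0.
have [r0|r0] := posnP (\rank W); first by exists [::]; apply: good0.
case: (pselect (primary W)) => [prim|nprim].
  exists [:: W]; split.
  - by move=> U; rewrite inE => /eqP ->.
  - by rewrite big_seq1.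
  - by rewrite big_seq1; apply/andP; split; rewrite submx_refl.
have [x [hx H]] : exists x, 0 <= x /\ forall lam, exists mu,
    eigU W (g x) mu /\ ~ (mu = lam \/ mu = conjc lam).
  apply: NNPP => H0; apply: nprim => x hx; apply: NNPP => H1; apply: H0.
  exists x; split => // lam; apply: NNPP => H2; apply: H1; exists lam => mu emu.
  apply: NNPP => H3; apply: H2; exists mu; split => //.
have [mu1 e1] := eigU_exists W (g x) (invW x hx) r0.
have [mu2 [e2 nh]] := H mu1.
have ne1 : mu2 != mu1 by apply/eqP => e; apply: nh; left.
have ne2 : mu2 != conjc mu1 by apply/eqP => e; apply: nh; right.
have [W1 [W2 [inv1 inv2 p1 p2 [cap sum]]]] := split_step gD W x mu1 mu2 invW hx e1 e2 ne1 ne2.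
have rkE : (\rank W1 + \rank W2)%N = \rank W.
  by rewrite -mxrank_disjoint_sum // (eqmx_rank sum).
have b1 : (\rank W1 <= k)%N.
  by rewrite -ltnS; apply: leq_trans rk; rewrite -rkE -addn1 leq_add2l.
have b2 : (\rank W2 <= k)%N.
  by rewrite -ltnS; apply: leq_trans rk; rewrite -rkE -add1n leq_add2r.
have [s1 [g1 r1 q1]] := IH W1 b1 inv1.
have [s2 [g2 r2 q2]] := IH W2 b2 inv2.
exists (s1 ++ s2); split.
- by move=> U; rewrite mem_cat => /orP [] ?; [apply: g1 | apply: g2].
- by rewrite big_cat /= r1 r2.
- rewrite big_cat /=; apply/eqmxP; apply: eqmx_trans (eqmxP sum).
  exact: adds_eqmx (eqmxP q1) (eqmxP q2).
Qed.

Lemma cases U : (0 < \rank U)%N -> inv g U -> primary U -> case1 U g \/ case2 U g.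
Proof.
move=> r0 invU prim.
have Hc : forall x, exists lam : R[i], 0 <= x ->
    forall mu, eigU U (g x) mu -> mu = lam \/ mu = conjc lam.
  move=> x; case: (pselect (0 <= x)) => hx.
    by have [lam Hl] := prim x hx; exists lam.
  by exists 0.
have [f Hf] := choice Hc.
case: (pselect (exists x, 0 <= x /\ 'Im (f x) != 0)) => [ex|nex].
  right; exists f; split => // x hx mu /(eigUP U (g x) mu (invU x hx)).
  exact: Hf.
left.
have im0 : forall y, 0 <= y -> f y = real_complex R (complex.Re (f y)).
  move=> y hy; have : 'Im (f y) == 0.
    by apply: contraT => ne; exfalso; apply: nex; exists y.
  rewrite -complexIm => /eqP [] him.
  by move: him; case: (f y) => a b /= ->.
have eigE : forall y, 0 <= y -> forall mu, eigU U (g y) mu ->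
    mu = real_complex R (complex.Re (f y)).
  move=> y hy mu /(Hf y hy); rewrite (im0 y hy) conjc_real; by case.
move=> x hx; exists (complex.Re (f x)); split.
  pose y := x / 2.
  have hy : 0 <= y by rewrite /y divr_ge0.
  have gx : g x = g y *m g y by rewrite -gD // -splitr.
  have [nu [v [v0 vU vA]]] := eigU_exists U (g y) (invU y hy) r0.
  have eny : eigU U (g y) nu by exists v.
  have : eigU U (g x) (nu ^+ 2).
    exists v; split => //; by rewrite gx map_mxM mulmxA vA -scalemxAl vA scalerA expr2.
  move/(eigE x hx); rewrite (eigE y hy nu eny) -rmorphXn => /complexI <-.
  exact: sqr_ge0.
move=> mu; apply/idP/eqP.
  by move/(eigUP U (g x) mu (invU x hx)); apply: eigE.
move=> ->; have [mu0 e0] := eigU_exists U (g x) (invU x hx) r0.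
apply/(eigUP U (g x) _ (invU x hx)); by rewrite -(eigE x hx mu0 e0).
Qed.

End Dec.


Theorem mainTheorem2 (R : realType) (n : nat) (g : R -> 'M[R]_n)
    (g0 : g 0 = 1%:M)
    (gD : forall x y : R, 0 <= x -> 0 <= y -> g (x + y) = g x *m g y) :
  exists (m : nat) (V : 'I_m -> 'M[R]_n),
    [/\ forall i, (0 < \rank (V i))%N,
        mxdirect (\sum_i V i)%MS,
        row_full (\sum_i V i)%MS,
        forall i (x : R), 0 <= x -> (V i *m g x <= V i)%MS
      & forall i, case1 (V i) g \/ case2 (V i) g].
Proof.
have inv1 : inv g (1%:M : 'M[R]_n) by move=> x _; exact: submx1.
have [s [gs rs qs]] := @decomp R n g gD n 1%:M (rank_leq_col _) inv1.
pose V := fun i : 'I_(size s) => nth 0 s i.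
have Vin : forall i, V i \in s by move=> i; apply: mem_nth.
have sumE : (\sum_i V i)%MS = (\sum_(U <- s) U)%MS.
  by rewrite [RHS](big_nth 0) big_mkord.
have rsumE : (\sum_i \rank (V i))%N = (\sum_(U <- s) \rank U)%N.
  by rewrite [RHS](big_nth 0) big_mkord.
have rk : \rank (\sum_i V i)%MS = n by rewrite sumE (eqmx_rank qs) mxrank1.
exists (size s), V; split.
- by move=> i; have [] := gs _ (Vin i).
- by rewrite mxdirectE /= rk rsumE rs mxrank1.
- by rewrite /row_full rk.
- by move=> i; have [] := gs _ (Vin i).
- by move=> i; have [r0 iv pr] := gs _ (Vin i); exact: (@cases R n g gD _ r0 iv pr).
Qed.
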